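(* Let $m\in\mathbb{N}$ and let $A$ be a finite (nonempty) sequence of positive integers. If $A$ is an $m$-palindrome, then the concatenation $A^2=AA$ is an $m$-palindrome.
   Context: For a finite sequence $(c_0,\dots,c_k)$ of positive integers, $[c_0,\dots,c_k]$ denotes the value of the finite continued fraction $c_0+\cfrac{1}{c_1+\cfrac{1}{\ddots+\cfrac{1}{c_k}}}$. A finite sequence $(c_0,\dots,c_k)$ of positive integers is an $m$-palindrome ($m\in\mathbb{N}$) if $[c_0,\dots,c_k]=m\,[c_k,\dots,c_0]$. *)

(* Defs.v *)
From mathcomp Require Import all_boot all_order all_algebra.
Set Implicit Arguments. Unset Strict Implicit. Unset Printing Implicit Defensive.
Import Order.TTheory GRing.Theory Num.Theory.
Local Open Scope ring_scope.

(* Value of the finite continued fraction [c_0, ..., c_k] as a rational.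
   cf [:: c] = c, cf (c :: s) = c + 1 / cf s for s nonempty.
   (The empty sequence gets the dummy value 0; it never arises in the
   statement since sequences are required to be nonempty.) *)
Fixpoint cf (s : seq nat) : rat :=
  match s with
  | [::] => 0
  | [:: c] => c%:R
  | c :: t => c%:R + (cf t)^-1
  end.

Definition posseq (s : seq nat) : bool := (s != [::]) && all (fun c => 0 < c)%N s.

Definition m_palindrome (m : nat) (s : seq nat) : Prop :=
  cf s = m%:R * cf (rev s).

(* Main.v *)
Require Import Defs.
From mathcomp Require Import all_boot all_order all_algebra.
From mathcomp Require Import ring lra.
Import Order.TTheory GRing.Theory Num.Theory.
Local Open Scope ring_scope.

Record M2 := Mk { e11 : rat; e12 : rat; e21 : rat; e22 : rat }.

Definition mmul (x y : M2) : M2 :=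
  Mk (e11 x * e11 y + e12 x * e21 y) (e11 x * e12 y + e12 x * e22 y)
     (e21 x * e11 y + e22 x * e21 y) (e21 x * e12 y + e22 x * e22 y).

Definition mtr (x : M2) : M2 := Mk (e11 x) (e21 x) (e12 x) (e22 x).

Definition cmat (c : nat) : M2 := Mk c%:R 1 1 0.

Fixpoint mat (s : seq nat) : M2 :=
  match s with [::] => Mk 1 0 0 1 | c :: t => mmul (cmat c) (mat t) end.

Lemma mmulA x y z : mmul x (mmul y z) = mmul (mmul x y) z.
Proof. case: x => ????; case: y => ????; case: z => ????; rewrite /mmul /=; congr Mk; ring. Qed.

Lemma mat_cat s t : mat (s ++ t) = mmul (mat s) (mat t).
Proof.
elim: s => [|c s IH] /=.
  by case: (mat t) => ????; rewrite /mmul /=; congr Mk; ring.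
by rewrite IH mmulA.
Qed.

Lemma mat_rev s : mat (rev s) = mtr (mat s).
Proof.
elim: s => [|c s IH] /=; first by rewrite /mtr.
rewrite rev_cons -cats1 mat_cat IH /=.
case: (mat s) => ????; rewrite /mtr /mmul /cmat /=; congr Mk; ring.
Qed.

Lemma mat_pos s : posseq s ->
  [/\ 0 < e11 (mat s), 0 < e21 (mat s), 0 <= e12 (mat s), 0 <= e22 (mat s)
   & cf s = e11 (mat s) / e21 (mat s)].
Proof.
elim: s => [|c t IH] //; rewrite /posseq /= => /andP [c0 Ht].
case: t IH Ht => [|d t] IH Ht; last (have {}Ht : posseq (d :: t) by rewrite /posseq Ht).
  rewrite /= !mulr0 !mulr1 !addr0 !add0r ?invr1 ?divr1; split => //.
  by rewrite ltr0n.
have [h1 h2 h3 h4 h5] := IH Ht.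

rewrite h5; move: h1 h2 h3 h4; case: (mat (d :: t)) => a b c1 d1 /= h1 h2 h3 h4.
rewrite !mul1r !mul0r !addr0.
have cpos : 0 <= (c%:R : rat) by rewrite ler0n.
split.
- by apply: ltr_pwDr => //; rewrite mulr_ge0 // ltW.
- done.
- by rewrite addr_ge0 // mulr_ge0.
- by [].
- rewrite invf_div; field; rewrite gt_eqF //.
Qed.

Lemma posseq_rev s : posseq s -> posseq (rev s).
Proof. rewrite /posseq all_rev; case: s => // c s; rewrite rev_cons -cats1; by case: (rev s). Qed.

Lemma posseq_cat s : posseq s -> posseq (s ++ s).
Proof. rewrite /posseq all_cat; case: s => // c s. by move=> /andP[_ ->]. Qed.

Arguments mat_pos {s}. Arguments posseq_rev {s}. Arguments posseq_cat {s}.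

Theorem lemma3p6 (m : nat) (A : seq nat) :
  posseq A -> m_palindrome m A -> m_palindrome m (A ++ A).
Proof.
move=> HA; rewrite /m_palindrome.
have [_ _ _ _ e1] := mat_pos HA.
have [_ _ _ _ e2] := mat_pos (posseq_rev HA).
have [_ _ _ _ e3] := mat_pos (posseq_cat HA).
have [_ _ _ _ e4] := mat_pos (posseq_rev (posseq_cat HA)).
have [a1 a2 a3 a4 _] := mat_pos HA.
have [_ b2 _ _ _] := mat_pos (posseq_rev HA).
rewrite e1 e2 e3 e4 !mat_rev mat_cat; rewrite mat_rev in b2.
move: a1 a2 a3 a4 b2; case: (mat A) => a b c d /= a1 a2 a3 a4 b2 H.
have bE : b = m%:R * c.
  have e : a * b = (a / c) * (c * b).
    by field; rewrite gt_eqF.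
  rewrite H in e.
  have e' : m%:R * (a / b) * (c * b) = (m%:R * c) * a.
    by field; rewrite gt_eqF.
  rewrite e' mulrC in e.
  have a0 : a != 0 by rewrite gt_eqF.
  apply: (mulfI a0); rewrite mulrC e; ring.
have m0 : (m%:R : rat) != 0.
  by apply/negP => /eqP m00; move: b2; rewrite bE m00 mul0r ltxx.
have ad : a + d != 0.
  by rewrite gt_eqF // ltr_wpDr.
rewrite bE; field.
have c0 : c != 0 by rewrite gt_eqF.
have -> : a * (m%:R * c) + m%:R * c * d = m%:R * c * (a + d) by ring.
have -> : c * a + d * c = c * (a + d) by ring.
by rewrite !mulf_neq0.
Qed.
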